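(* If $A$ is a coherent $\mathbb{Z}$-algebra, then the sequence $(P_i)_{i\in\mathbb{Z}}$ in the abelian category $\operatorname{coh}A$ is a coherent sequence.
   Context: $k$ is a fixed field. A $\mathbb{Z}$-algebra is an associative $k$-algebra $A=\bigoplus_{i\le j}A_{ij}$ with $A_{ii}=k$, only nonzero products $A_{jk}\otimes A_{ij}\to A_{ik}$, units acting as identity, $\dim A_{ij}<\infty$. An $A$-module is a graded right module $M=\bigoplus_iM_i$ with action $M_j\otimes A_{ij}\to M_i$. $P_j=\bigoplus_iA_{ij}$; $S_j$ is $k$ in degree $j$ and $0$ elsewhere; $\mathcal{P}$ = finite direct sums of $P_j$'s. $M$ is finitely generated if a quotient of some $P\in\mathcal{P}$; coherent if finitely generated and every kernel of a map $P\to M$, $P\in\mathcal{P}$, is finitely generated. $\operatorname{coh}A$ is the (abelian) full subcategory of coherent modules. $A$ is coherent if all $P_j$, $S_j$ are coherent. For a sequence $(E_i)$ in an abelian $k$-linear category $\mathcal{C}$ (with $\dim\operatorname{Hom}(E_i,X)<\infty$ for all $X$): it is projective if for every surjection $X\to Y$ there is $n$ such that $\operatorname{Hom}(E_i,X)\to\operatorname{Hom}(E_i,Y)$ is surjective for $i<n$; a projective sequence is coherent if for every $X\in\mathcal{C}$ and $m\in\mathbb{Z}$ there are $i_1,\dots,i_s\le m$ such that $\bigoplus_j\operatorname{Hom}(E_{i_j},X)\otimes\operatorname{Hom}(E_i,E_{i_j})\to\operatorname{Hom}(E_i,X)$ is surjective for $i\ll0$. *)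

(* Defs.v *)
From HB Require Import structures.
From mathcomp Require Import all_boot all_order all_algebra.
Set Implicit Arguments. Unset Strict Implicit. Unset Printing Implicit Defensive.
Import Order.TTheory GRing.Theory Num.Theory.
Local Open Scope ring_scope.

(* A Z-algebra is given by its components A_ij (finite-dimensional     *)
(* k-vector spaces, as vectType), the products A_jl (x) A_ij -> A_il   *)
(* and the units 1_i in A_ii.  Components with i > j are required to   *)
(* vanish (A = (+)_{i<=j} A_ij).                                       *)

Record zalg (k : fieldType) := ZAlg {
  zcomp : int -> int -> vectType k;
  zmul : forall i j l : int, zcomp j l -> zcomp i j -> zcomp i l;
  zone : forall i : int, zcomp i i }.

Section ZAlgDefs.
Variable k : fieldType.
Variable A : zalg k.

Local Notation Acomp := (zcomp A).
Local Notation mul := (@zmul _ A).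

Definition is_zalg : Prop :=
  [/\
      (forall (i j : int) (a : Acomp i j), (j < i)%R -> a = 0),
      (forall i : int, \dim (fullv : {vspace Acomp i i}) = 1%N),
      (forall (i j l : int) (c : k) (a a' : Acomp j l) (b : Acomp i j),
          mul (c *: a + a') b = c *: mul a b + mul a' b),
      (forall (i j l : int) (c : k) (a : Acomp j l) (b b' : Acomp i j),
          mul a (c *: b + b') = c *: mul a b + mul a b') &
      (forall (i j l m : int) (a : Acomp l m) (b : Acomp j l) (c : Acomp i j),
          mul (mul a b) c = mul a (mul b c)) /\
      (forall (i j : int) (a : Acomp i j),
          mul (zone A j) a = a /\ mul a (zone A i) = a)].

(* Graded right A-modules M = (+)_i M_i with action M_j (x) A_ij -> M_i. *)
Record gmod := GMod {
  gcar : int -> lmodType k;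
  gact : forall i j : int, gcar j -> Acomp i j -> gcar i }.

Definition is_gmod (M : gmod) : Prop :=
  [/\ (forall (i j : int) (c : k) (m m' : gcar M j) (a : Acomp i j),
          gact (c *: m + m') a = c *: gact m a + gact m' a),
      (forall (i j : int) (c : k) (m : gcar M j) (a a' : Acomp i j),
          gact m (c *: a + a') = c *: gact m a + gact m a'),
      (forall (i j l : int) (m : gcar M l) (a : Acomp j l) (b : Acomp i j),
          gact (gact m a) b = gact m (mul a b)) &
      (forall (i : int) (m : gcar M i), gact m (zone A i) = m)].

Definition is_hom (M N : gmod) (f : forall i : int, gcar M i -> gcar N i) : Prop :=
  (forall (i : int) (c : k) (x y : gcar M i), f i (c *: x + y) = c *: f i x + f i y)
  /\ (forall (i j : int) (m : gcar M j) (a : Acomp i j),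
        f i (gact m a) = gact (f j m) a).

Arguments is_hom : clear implicits.

Definition Pmod (j : int) : gmod :=
  @GMod (fun i => (Acomp i j : lmodType k))
        (fun i i' (m : Acomp i' j) (a : Acomp i i') => mul m a).

(* A morphism (+)_{t<s} P_{js t} -> M is given (universal property of   *)
(* the finite direct sum) by a family of morphisms P_{js t} -> M.        *)
Definition sum_hom (M : gmod) (s : nat) (js : 'I_s -> int)
    (f : forall (t : 'I_s) (i : int), Acomp i (js t) -> gcar M i) : Prop :=
  forall t : 'I_s, is_hom (Pmod (js t)) M (@f t).

Definition sum_surj (M : gmod) (s : nat) (js : 'I_s -> int)
    (f : forall (t : 'I_s) (i : int), Acomp i (js t) -> gcar M i) : Prop :=
  forall (i : int) (m : gcar M i),
    exists a : forall t : 'I_s, Acomp i (js t), m = \sum_(t < s) f t i (a t).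

Definition fin_gen (M : gmod) : Prop :=
  exists (s : nat) (js : 'I_s -> int)
         (f : forall (t : 'I_s) (i : int), Acomp i (js t) -> gcar M i),
    sum_hom f /\ sum_surj f.

(* The kernel of the morphism f : P := (+)_{t<s} P_{js t} -> M is finitely *)
(* generated: there are P' = (+)_{u<s'} P_{es u} and a morphism            *)
(* g : P' -> P (given by its matrix components g u t : P_{es u} ->         *)
(* P_{js t}) whose image is exactly ker f.                                 *)
Definition ker_fin_gen (M : gmod) (s : nat) (js : 'I_s -> int)
    (f : forall (t : 'I_s) (i : int), Acomp i (js t) -> gcar M i) : Prop :=
  exists (s' : nat) (es : 'I_s' -> int)
         (g : forall (u : 'I_s') (t : 'I_s) (i : int),
                Acomp i (es u) -> Acomp i (js t)),
    [/\ (forall (u : 'I_s') (t : 'I_s), is_hom (Pmod (es u)) (Pmod (js t)) (g u t)),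
        (forall (u : 'I_s') (i : int) (b : Acomp i (es u)),
            \sum_(t < s) f t i (g u t i b) = 0) &
        (forall (i : int) (a : forall t : 'I_s, Acomp i (js t)),
            \sum_(t < s) f t i (a t) = 0 ->
            exists b : forall u : 'I_s', Acomp i (es u),
              forall t : 'I_s, a t = \sum_(u < s') g u t i (b u))].

Definition coherent_mod (M : gmod) : Prop :=
  fin_gen M /\
  forall (s : nat) (js : 'I_s -> int)
         (f : forall (t : 'I_s) (i : int), Acomp i (js t) -> gcar M i),
    sum_hom f -> ker_fin_gen f.

(* M is (a copy of) S_j: k in degree j and 0 elsewhere.  The module     *)
(* structure of such an M is forced by the module axioms.               *)
Definition is_S (j : int) (M : gmod) : Prop :=
  (exists v : gcar M j, v != 0 /\ forall x : gcar M j, exists c : k, x = c *: v)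
  /\ (forall (i : int) (x : gcar M i), i != j -> x = 0).

Definition coherent_zalg : Prop :=
  (forall j : int, coherent_mod (Pmod j)) /\
  (forall (j : int) (S : gmod), is_gmod S -> is_S j S -> coherent_mod S).

Definition in_coh (M : gmod) : Prop := is_gmod M /\ coherent_mod M.

Definition P_projective_seq : Prop :=
  forall (X Y : gmod) (p : forall i : int, gcar X i -> gcar Y i),
    in_coh X -> in_coh Y -> is_hom X Y p ->
    (forall (i : int) (y : gcar Y i), exists x : gcar X i, p i x = y) ->
    exists n : int, forall i : int, (i < n)%R ->
      forall h : forall d : int, Acomp d i -> gcar Y d,
        is_hom (Pmod i) Y h ->
        exists g : forall d : int, Acomp d i -> gcar X d,
          is_hom (Pmod i) X g /\
          forall (d : int) (x : Acomp d i), p d (g d x) = h d x.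

(* The sequence (P_i) is a coherent sequence in coh A.  Surjectivity of *)
(* (+)_t Hom(P_{is t}, X) (x) Hom(P_i, P_{is t}) -> Hom(P_i, X) means     *)
(* that every h is a finite sum of composites phi o psi.                  *)
Definition P_coherent_seq : Prop :=
  P_projective_seq /\
  forall (X : gmod) (m : int), in_coh X ->
    exists (s : nat) (ix : 'I_s -> int),
      (forall t : 'I_s, (ix t <= m)%R) /\
      exists n : int, forall i : int, (i < n)%R ->
        forall h : forall d : int, Acomp d i -> gcar X d,
          is_hom (Pmod i) X h ->
          exists (r : 'I_s -> nat)
                 (phi : forall (t : 'I_s) (u : 'I_(r t)) (d : int),
                          Acomp d (ix t) -> gcar X d)
                 (psi : forall (t : 'I_s) (u : 'I_(r t)) (d : int),
                          Acomp d i -> Acomp d (ix t)),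
            [/\ (forall t u, is_hom (Pmod (ix t)) X (phi t u)),
                (forall t u, is_hom (Pmod i) (Pmod (ix t)) (psi t u)) &
                (forall (d : int) (x : Acomp d i),
                    h d x = \sum_(t < s) \sum_(u < r t) phi t u d (psi t u d x))].

End ZAlgDefs.

(* Main.v *)
Require Import Defs.
From mathcomp Require Import all_boot all_order all_algebra.
From mathcomp Require Import zify.
From Stdlib Require Import ClassicalEpsilon.
Set Implicit Arguments. Unset Strict Implicit. Unset Printing Implicit Defensive.
Import Order.TTheory GRing.Theory Num.Theory.
Local Open Scope ring_scope.

Section Lin.
Variable k : fieldType.
Lemma lin_facts (U V : lmodType k) (F : U -> V) :
  (forall c x y, F (c *: x + y) = c *: F x + F y) ->
  [/\ F 0 = 0, forall x y, F (x + y) = F x + F y &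
      forall (I : finType) (G : I -> U), F (\sum_i G i) = \sum_i F (G i)].
Proof.
move=> H.
have F0 : F 0 = 0.
  have := H 1 0 0; rewrite !scale1r addr0 => e.
  have := congr1 (fun z => z - F 0) e; rewrite addrK subrr => e2.
  by rewrite {1}e2.
have FD : forall x y, F (x + y) = F x + F y.
  by move=> x y; have := H 1 x y; rewrite !scale1r.
split=> // I G; exact: (big_morph F FD F0).
Qed.

Lemma ordb_true (b : bool) (t : 'I_b) : b = true.
Proof. by case: b t => // -[]. Qed.

Lemma ordb_eq (b : bool) (s t : 'I_b) : s = t.
Proof. apply/val_inj; case: b s t => -[[|?] ?] [[|?] ?] //. Qed.

Lemma sum_ordb (V : lmodType k) (b : bool) (F : 'I_b -> V) (t : 'I_b) :
  \sum_s F s = F t.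
Proof.
rewrite (bigD1 t) //= big1 ?addr0 // => s /negP[]; by rewrite (ordb_eq s t).
Qed.

Lemma sum_ordf (V : lmodType k) (b : bool) (F : 'I_b -> V) :
  b = false -> \sum_s F s = 0.
Proof. move=> hb; apply: big1 => s _; have := ordb_true s; by rewrite hb. Qed.
End Lin.

Lemma dchoice (I : Type) (T : I -> Type) (P : forall i, T i -> Prop) :
  (forall i, exists x, P i x) -> exists f : forall i, T i, forall i, P i (f i).
Proof.
move=> H; exists (fun i => proj1_sig (constructive_indefinite_description _ (H i))).
move=> i; exact: proj2_sig.
Qed.

Section Main.
Variable k : fieldType.
Variable A : zalg k.
Hypothesis hz : is_zalg A.
Local Notation Ac := (zcomp A).
Local Notation mul := (@zmul _ A).

Lemma vanish i j (a : Ac i j) : (j < i)%R -> a = 0.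
Proof. by case: hz => H _ _ _ _; exact: H. Qed.

Lemma mulL i j l (b : Ac i j) : forall c (a a' : Ac j l), mul (c *: a + a') b = c *: mul a b + mul a' b.
Proof. by case: hz => _ _ H _ _; move=> c a a'; exact: H. Qed.
Lemma mulR i j l (a : Ac j l) : forall c (b b' : Ac i j), mul a (c *: b + b') = c *: mul a b + mul a b'.
Proof. by case: hz => _ _ _ H _; move=> c b b'; exact: H. Qed.
Lemma massoc i j l m (a : Ac l m) (b : Ac j l) (c : Ac i j) : mul (mul a b) c = mul a (mul b c).
Proof. by case: hz => _ _ _ _ [H _]; exact: H. Qed.
Lemma unitL i j (a : Ac i j) : mul (zone A j) a = a.
Proof. by case: hz => _ _ _ _ [_ H]; case: (H i j a). Qed.
Lemma unitR i j (a : Ac i j) : mul a (zone A i) = a.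
Proof. by case: hz => _ _ _ _ [_ H]; case: (H i j a). Qed.

Lemma mul0l i j l (b : Ac i j) : mul (0 : Ac j l) b = 0.
Proof. by case: (@lin_facts _ _ _ (fun a : Ac j l => mul a b) (mulL b)). Qed.
Lemma mul0r i j l (a : Ac j l) : mul a (0 : Ac i j) = 0.
Proof. by case: (@lin_facts _ _ _ (fun b : Ac i j => mul a b) (mulR a)). Qed.
Lemma mulsuml i j l (I : finType) (G : I -> Ac j l) (b : Ac i j) :
  mul (\sum_u G u) b = \sum_u mul (G u) b.
Proof. by case: (@lin_facts _ _ _ (fun a : Ac j l => mul a b) (mulL b)) => _ _ ->. Qed.
Lemma mulsumr i j l (I : finType) (G : I -> Ac i j) (a : Ac j l) :
  mul a (\sum_u G u) = \sum_u mul a (G u).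
Proof. by case: (@lin_facts _ _ _ (fun b : Ac i j => mul a b) (mulR a)) => _ _ ->. Qed.

Lemma mul_van i j (a : Ac j i) (b : Ac i j) : i != j -> mul a b = 0.
Proof.
move=> hij; case: (ltgtP i j) hij => // h _.
  by rewrite (vanish a h) mul0l.
by rewrite (vanish b h) mul0r.
Qed.

Definition Scar (q i : int) : lmodType k := {ffun 'I_(i == q) -> Ac i q}.
Definition Sact q i j (m : Scar q j) (a : Ac i j) : Scar q i :=
  [ffun _ : 'I_(i == q) => \sum_(s : 'I_(j == q)) mul (m s) a].
Definition Smod q : gmod A := @GMod k A (Scar q) (@Sact q).

Lemma S_gmod q : is_gmod (Smod q).
Proof.
split.
- move=> i j c m m' a; apply/ffunP => t; rewrite !ffunE /=.
  rewrite scaler_sumr -big_split /=; apply: eq_bigr => s _.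
  by rewrite !ffunE mulL.
- move=> i j c m a a'; apply/ffunP => t; rewrite !ffunE /=.
  rewrite scaler_sumr -big_split /=; apply: eq_bigr => s _.
  by rewrite mulR.
- move=> i j l m a b; apply/ffunP => t; rewrite !ffunE /=.
  under eq_bigr do rewrite ffunE mulsuml.
  rewrite sumr_const card_ord.
  rewrite (eq_bigr (fun s => mul (m s) (mul a b))); last by move=> s _; rewrite massoc.
  rewrite mulrb; case: ifP => hj //.
  have [hl|hl] : l = q \/ l != q by case: (eqVneq l q); [left|right].
  2: by rewrite sum_ordf //; apply/negbTE.
  subst l; have /eqP hi := ordb_true t; subst i.
  have -> : mul a b = 0 by apply: mul_van; rewrite eq_sym hj.
  by symmetry; apply: big1 => s _; rewrite mul0r.
- by move=> i m; apply/ffunP => t; rewrite ffunE /= (sum_ordb _ t) unitR.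
Qed.

Lemma zone_neq0 q : zone A q != 0.
Proof.
apply/negP => /eqP z0; case: hz => _ hd _ _ _; have := hd q.
suff -> : (fullv : {vspace Ac q q}) = 0%VS by rewrite dimv0.
apply/vspaceP => x; rewrite memvf memv0.
have -> : x = 0 by rewrite -(unitR x) z0 mul0r.
by rewrite eqxx.
Qed.

Lemma S_isS q : is_S q (Smod q).
Proof.
have q0 : (0 < (q == q))%N by rewrite eqxx.
pose t0 : 'I_(q == q) := Ordinal q0.
split.
- exists [ffun _ : 'I_(q == q) => zone A q]; split.
  + apply/negP => /eqP/ffunP/(_ t0); rewrite !ffunE => /eqP; apply/negP.
    exact: zone_neq0.
  + move=> x; have : x t0 \in <[zone A q]>%VS.
      have e : (<[zone A q]> == fullv)%VS.
        by case: hz => _ hd _ _ _; rewrite eqEdim subvf dim_vline zone_neq0 (hd q).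
      by rewrite (eqP e) memvf.
    case/vlineP => c hc; exists c; apply/ffunP => t.
    by rewrite !ffunE (ordb_eq t t0).
- move=> i x hi; apply/ffunP => t; exfalso; move: (ordb_true t).
  by rewrite (negbTE hi).
Qed.

Definition fS q (t : 'I_1) i (a : Ac i q) : gcar (Smod q) i :=
  [ffun _ : 'I_(i == q) => a].

Lemma fS_hom q : sum_hom (js := fun _ : 'I_1 => q) (@fS q).
Proof.
move=> t; split.
- by move=> i c x y; apply/ffunP => s; rewrite !ffunE.
- move=> i j m a; apply/ffunP => s; rewrite !ffunE /=.
  under eq_bigr do rewrite ffunE.
  rewrite sumr_const card_ord mulrb; case: ifP => hj //.
  have /eqP hi := ordb_true s; subst i.
  by rewrite mul_van // eq_sym hj.
Qed.

Hypothesis hc : coherent_zalg A.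

Lemma kernel_data q : exists s' (es : 'I_s' -> int) (a : forall u, Ac (es u) q),
  (forall u, (q <= es u)%R -> a u = 0) /\
  forall i, (i < q)%R -> forall x : Ac i q,
    exists b : forall u, Ac i (es u), x = \sum_u mul (a u) (b u).
Proof.
case: hc => _ hS; case: (hS q (Smod q) (S_gmod q) (S_isS q)) => _ hker.
case: (hker 1%N (fun _ => q) (@fS q) (fS_hom q)) => s' [es [g [hg hland honto]]].
exists s', es, (fun u => g u ord0 (es u) (zone A (es u))); split.
- move=> u hu; rewrite le_eqVlt in hu; case/orP: hu => [/eqP e|hu].
  + have := hland u (es u) (zone A (es u)); rewrite big_ord1 => /ffunP.
    have t0 : (0 < (es u == q))%N by rewrite -e eqxx.
    by move=> /(_ (Ordinal t0)); rewrite !ffunE.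
  + exact: vanish hu.
- move=> i hi x; have := honto i (fun _ => x); rewrite big_ord1; case.
    by apply/ffunP => t; exfalso; move: (ordb_true t); rewrite lt_eqF.
  move=> b hb; exists b; rewrite (hb ord0); apply: eq_bigr => u _.
  by have := (hg u ord0).2 i (es u) (zone A (es u)) (b u); rewrite /= unitL.
Qed.

Record fam q := Fam { fI : finType; fl : fI -> int; fa : forall v, Ac (fl v) q }.

Definition Gen m q (F : fam q) : Prop :=
  (forall v, (@fl _ F v <= m)%R) /\
  forall i, (i <= m)%R -> forall x : Ac i q,
    exists b : forall v, Ac i (@fl _ F v), x = \sum_v mul (@fa _ F v) (b v).

Lemma desc_base m q : (q <= m)%R -> exists F : fam q, Gen m F.
Proof.
move=> hq; exists (@Fam q 'I_1 (fun _ => q) (fun _ => zone A q)); split => //.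
by move=> i hi x; exists (fun _ => x); rewrite big_ord1 unitL.
Qed.

Lemma desc N : forall m q, (q - m <= N%:Z)%R -> exists F : fam q, Gen m F.
Proof.
elim: N => [|N IH] m q hq.
  by apply: desc_base; lia.
case: (leP q m) => hqm; first exact: desc_base.
have [s' [es [a [ha0 hgen]]]] := kernel_data q.
have Cu : forall u, exists F : fam q, (forall v, (@fl _ F v <= m)%R) /\
    forall i, (i <= m)%R -> forall b : Ac i (es u),
      exists c : forall v, Ac i (@fl _ F v), mul (a u) b = \sum_v mul (@fa _ F v) (c v).
  move=> u; case: (ltP (es u) q) => heu.
  - have [F [hF1 hF2]] := IH m (es u) (ltac:(lia)).
    exists (@Fam q (fI F) (@fl _ F) (fun v => mul (a u) (@fa _ F v))); split=> // i hi b.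
    have [c hc0] := hF2 i hi b; exists c.
    by rewrite hc0 mulsumr; apply: eq_bigr => v _; rewrite massoc.
  - exists (@Fam q 'I_0 (fun _ => q) (fun _ => 0)); split; first by case.
    move=> i hi b; exists (fun _ => 0).
    by rewrite ha0 // mul0l big_ord0.
have [F hF] := dchoice Cu.
exists (@Fam q {u : 'I_s' & fI (F u)} (fun w => @fl _ (F (tag w)) (tagged w))
          (fun w => @fa _ (F (tag w)) (tagged w))); split.
  by move=> w; exact: (hF (tag w)).1.
move=> i hi x; have hiq : (i < q)%R by exact: le_lt_trans hi hqm.
have [b hb] := hgen i hiq x.
have Cc : forall u, exists c : forall v, Ac i (@fl _ (F u) v),
    mul (a u) (b u) = \sum_v mul (@fa _ (F u) v) (c v).
  by move=> u; exact: (hF u).2 i hi (b u).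
have [C hC] := dchoice Cc.
exists (fun w => C (tag w) (tagged w)); rewrite hb.
rewrite (eq_bigr _ (fun u _ => hC u)).
exact: (sig_big_dep xpredT (fun _ => xpredT) (fun u v => mul (@fa _ (F u) v) (C u v))).
Qed.

Lemma desc_all m q : exists F : fam q, Gen m F.
Proof. by apply: (desc (N := `|q - m|%N)); lia. Qed.
End Main.

Theorem corollary2p5 (k : fieldType) (A : zalg k) :
  is_zalg A -> coherent_zalg A -> P_coherent_seq A.
Proof.
move=> hz hc; split.
- move=> X Y p [hX _] [hY _] [plin pact] psurj; exists 0 => i _ h [hlin hact].
  have [x hx] := psurj i (h i (zone A i)).
  case: hX => X1 X2 X3 X4.
  exists (fun d a => gact x a); split.
    split; first by move=> d c a a'; exact: X2.
    by move=> d j mm a /=; rewrite X3.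
  by move=> d a; rewrite pact hx -hact /= unitL.
- move=> X m [hX [[s0 [js [f [fhom fsurj]]]] _]].
  have [F hF] := dchoice (fun t : 'I_s0 => desc_all hz hc m (js t)).
  pose J : finType := {t : 'I_s0 & fI (F t)}.
  exists #|J|, (fun t => fl (tagged (enum_val t : J))).
  split; first by move=> t; exact: (hF _).1.
  exists (m + 1) => i hi h [hlin hact].
  have him : (i <= m)%R by lia.
  have [a ha] := fsurj i (h i (zone A i)).
  have Cc : forall t, exists c : forall v, zcomp A i (@fl _ _ _ (F t) v),
      a t = \sum_v zmul (fa v) (c v).
    by move=> t; exact: (hF t).2 i him (a t).
  have [C hC] := dchoice Cc.
  exists (fun _ => 1%N).
  exists (fun t u d y => f (tag (enum_val t : J)) d (zmul (fa (tagged (enum_val t : J))) y)).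
  exists (fun t u d y => zmul (C (tag (enum_val t : J)) (tagged (enum_val t : J))) y).
  split.
  + move=> t u; split.
      by move=> d c y y'; rewrite /= mulR //; exact: (fhom _).1.
    by move=> d j mm y /=; rewrite -massoc //; exact: (fhom _).2.
  + move=> t u; split.
      by move=> d c y y'; rewrite /= mulR.
    by move=> d j mm y /=; rewrite massoc.
  + move=> d x.
    pose G (t : 'I_s0) (v : fI (F t)) :=
      f t d (zmul (fa v) (zmul (C t v) x)).
    transitivity (\sum_(w in J) G (tag w) (tagged w)); last first.
      by rewrite big_enum_val; apply: eq_bigr => t _; rewrite big_ord1.
    have -> : \sum_(w in J) G (tag w) (tagged w) = \sum_(w : J) G (tag w) (tagged w).
      by apply: eq_bigl => w; rewrite inE.
    rewrite -(sig_big_dep xpredT (fun _ => xpredT) G).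
    have -> : h d x = gact (h i (zone A i)) x by rewrite -hact /= unitL.
    rewrite ha.
    case: hX => hX1 _ _ _.
    case: (@lin_facts _ _ _ (fun mm : gcar X i => gact mm x) (fun c m1 m2 => hX1 _ _ c m1 m2 x)) => _ _ ->.
    apply: eq_bigr => t _.
    rewrite -(fhom t).2 /= hC mulsuml //.
    case: (@lin_facts _ _ _ (f t d) ((fhom t).1 d)) => _ _ ->.
    by apply: eq_bigr => v _; rewrite massoc.
Qed.
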